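(* Let $x$ be a test input with finite nonempty candidate-output set $\mathcal{Y}_x$, let $\sigma^*_x\colon \mathcal{Y}_x\to\mathbb{N}$ be the ground-truth ranking function on $\mathcal{Y}_x$, and let $\hat{\sigma}^U_x\colon\mathcal{Y}_x\to\mathbb{N}$ be the ranking derived from a utility function $U$ learnt by an $\epsilon$-convergent L2R algorithm, i.e. there is a non-negative integer $\epsilon$ with $\max_{y\in\mathcal{Y}_x}|\hat{\sigma}^U_x(y)-\sigma^*_x(y)|\le\epsilon$. Let $\pi^*$ be an optimal policy for $M_x(\sigma^*_x)$, and let $\hat{\pi}_n$ be the proper policy for $M_x(\hat{\sigma}^U_x)$ learnt by a $\delta$-convergent RL algorithm after $n$ episodes. Then, as $n\to\infty$, $$\lim_{n\to\infty}\mathcal{R}_{\sigma^*_x}(\hat{\pi}_n|x)\;\ge\;\mathcal{R}_{\sigma^*_x}(\pi^*|x)-\delta-\epsilon .$$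
   Context: Setting: for an input $x$, $\mathcal{Y}_x$ is the finite set of admissible outputs (e.g. extractive summaries of $x$ satisfying a length limit). A ranking function $\sigma_x\colon\mathcal{Y}_x\to\mathbb{N}$ assigns to each $y\in\mathcal{Y}_x$ the number of candidates in $\mathcal{Y}_x$ of equal or lower quality than $y$ (including $y$ itself) with respect to some quality preorder; in particular a highest-quality candidate gets value $|\mathcal{Y}_x|$. The ground-truth ranking $\sigma^*_x$ is of this form. Given a utility function $U(y,x)\in\mathbb{R}$, the derived ranking is $\hat{\sigma}^U_x(y)=|\{y'\in\mathcal{Y}_x: U(y',x)\le U(y,x)\}|$, so that $\hat{\sigma}^U_x(y_1)>\hat{\sigma}^U_x(y_2)$ iff $U(y_1,x)>U(y_2,x)$. $M_x(\sigma_x)$ denotes the episodic Markov decision process for generating an output for $x$ (states are partial outputs, actions add a component or terminate) in which the only nonzero reward is given at the end of an episode and equals $\sigma_x(y)$ for the generated output $y$. A policy $\pi$ induces probabilities $\pi(y|x)$ of generating $y\in\mathcal{Y}_x$; it is proper if $\sum_{y\in\mathcal{Y}_x}\pi(y|x)=1$. For a proper policy the expected reward is $\mathcal{R}_{\sigma_x}(\pi|x)=\sum_{y\in\mathcal{Y}_x}\pi(y|x)\sigma_x(y)$, and an optimal policy for $M_x(\sigma_x)$ is one maximizing this quantity (so it puts positive probability only on outputs with $\sigma_x(y)=|\mathcal{Y}_x|$ and has expected reward $|\mathcal{Y}_x|$). An RL algorithm is $\delta$-convergent for $M_x(\sigma_x)$ (with $\delta\in\mathbb{R}_{\ge0}$)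 if, denoting by $\pi_n$ its policy after $n$ episodes of learning and by $\pi^*$ an optimal policy for $M_x(\sigma_x)$, $\lim_{n\to\infty}\big(\mathcal{R}_{\sigma_x}(\pi^*|x)-\mathcal{R}_{\sigma_x}(\pi_n|x)\big)\le\delta$. *)

(* Defs.v *)
From HB Require Import structures.
From mathcomp Require Import all_boot all_order all_algebra.
From mathcomp Require Import all_classical all_reals all_analysis.
Set Implicit Arguments. Unset Strict Implicit. Unset Printing Implicit Defensive.
Import Order.TTheory GRing.Theory Num.Theory.
Local Open Scope ring_scope.

(* Y plays the role of the finite candidate set \mathcal{Y}_x (x fixed). *)

Definition is_preorder (Y : finType) (le : rel Y) : Prop :=
  reflexive le /\ transitive le.

Definition is_ranking (Y : finType) (sigma : Y -> nat) : Prop :=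
  exists le : rel Y, is_preorder le /\
    forall y, sigma y = #|[set y' | le y' y]|.

Definition derived_ranking (R : realType) (Y : finType) (U : Y -> R) : Y -> nat :=
  fun y => #|[set y' | U y' <= U y]|.

(* A policy is represented by the probabilities pi(y|x) it induces on Y. *)
Definition proper_policy (R : realType) (Y : finType) (pi : Y -> R) : Prop :=
  (forall y, 0 <= pi y) /\ \sum_(y : Y) pi y = 1.

Definition exp_reward (R : realType) (Y : finType) (sigma : Y -> nat)
  (pi : Y -> R) : R := \sum_(y : Y) pi y * (sigma y)%:R.

Definition optimal (R : realType) (Y : finType) (sigma : Y -> nat)
  (pi : Y -> R) : Prop :=
  proper_policy pi /\ forall pi' : Y -> R, proper_policy pi' ->
    exp_reward sigma pi' <= exp_reward sigma pi.

Definition delta_convergent (R : realType) (Y : finType) (sigma : Y -> nat)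
  (pis : nat -> Y -> R) (delta : R) : Prop :=
  forall pistar : Y -> R, optimal sigma pistar ->
    cvgn (fun n => exp_reward sigma pistar - exp_reward sigma (pis n)) /\
    limn (fun n => exp_reward sigma pistar - exp_reward sigma (pis n)) <= delta.

(* Main.v *)
Require Import Defs.
From HB Require Import structures.
From mathcomp Require Import all_boot all_order all_algebra.
From mathcomp Require Import all_classical all_reals all_analysis.
From mathcomp Require Import zify ring lra.
Import Order.TTheory GRing.Theory Num.Theory.
Local Open Scope ring_scope.

Lemma einf_mono (R : realType) (u v : (\bar R)^nat) :
  (forall n, (v n <= u n)%E) -> (limn_einf v <= limn_einf u)%E.
Proof.
move=> vu; rewrite !limn_einf_lim; apply: lee_lim;
  [exact: is_cvg_einfs|exact: is_cvg_einfs|].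
apply: nearW => n /=; apply: le_ereal_inf_tmp => _ [m /= nm <-].
apply: le_trans (vu m); apply: ereal_inf_lbound; by exists m.
Qed.

Lemma reward_le (R : realType) (Y : finType) (sigma : Y -> nat) (N : nat)
  (pi : Y -> R) : proper_policy pi -> (forall y, (sigma y <= N)%N) ->
  exp_reward sigma pi <= N%:R.
Proof.
move=> [p0 p1] sN; rewrite /exp_reward.
apply: (@le_trans _ _ (\sum_y pi y * N%:R)).
  by apply: ler_sum => y _; apply: ler_wpM2l => //; rewrite ler_nat.
by rewrite -mulr_suml p1 mul1r.
Qed.

Theorem theorem1 (R : realType) (Y : finType) (y0 : Y)
  (sigma_star : Y -> nat) (U : Y -> R) (eps : nat)
  (pistar : Y -> R) (pis : nat -> Y -> R) (delta : R) :
  is_ranking sigma_star ->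
  (\max_(y : Y) `|derived_ranking U y - sigma_star y| <= eps)%N ->
  optimal sigma_star pistar ->
  0 <= delta ->
  (forall n, proper_policy (pis n)) ->
  delta_convergent (derived_ranking U) pis delta ->
  ((exp_reward sigma_star pistar - delta - eps%:R)%:E <=
     limn_einf (fun n => (exp_reward sigma_star (pis n))%:E))%E.
Proof.
move=> [le [_ Hle]] Hmax [Hpst _] d0 Hpis Hdc.
set N := #|Y|.
have sN : forall y, (sigma_star y <= N)%N by move=> y; rewrite Hle max_card.
have hN : forall y, (derived_ranking U y <= N)%N by move=> y; exact: max_card.
set ymax := [arg max_(i > y0) U i]%O.
have hmax : derived_ranking U ymax = N.
  rewrite /derived_ranking.
  have -> : [set y' | U y' <= U ymax] = [set: Y].
    apply/setP => y; rewrite !inE.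
    rewrite /ymax; case: (@real_arg_maxP R Y y0 predT U isT (fun i _ => num_real (U i))).
    by move=> i _ /(_ y isT).
  by rewrite cardsT.
pose pihat : Y -> R := fun y => (y == ymax)%:R.
have Hprop : proper_policy pihat.
  split; first by move=> y; rewrite /pihat ler0n.
  rewrite (bigD1 ymax) //= /pihat eqxx big1 ?addr0 // => y /negbTE -> //.
have Hrew : exp_reward (derived_ranking U) pihat = N%:R.
  rewrite /exp_reward (bigD1 ymax) //= /pihat eqxx mul1r hmax big1 ?addr0 //.
  by move=> y /negbTE ->; rewrite mul0r.
have Hopt : optimal (derived_ranking U) pihat.
  split => // pi' Hp'; rewrite Hrew; exact: reward_le.
have Heps : forall pi : Y -> R, proper_policy pi ->
    exp_reward (derived_ranking U) pi - eps%:R <= exp_reward sigma_star pi.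
  move=> pi [p0 p1].
  have Hy : forall y, (derived_ranking U y <= sigma_star y + eps)%N.
    move=> y; have := leq_trans (leq_bigmax_cond
        (F := fun y => `|derived_ranking U y - sigma_star y|%N) y isT) Hmax.
    move=> H; lia.
  rewrite lerBlDr /exp_reward.
  have -> : eps%:R = \sum_y pi y * eps%:R :> R by rewrite -mulr_suml p1 mul1r.
  rewrite -big_split /=; apply: ler_sum => y _; rewrite -mulrDr.
  by apply: ler_wpM2l => //; rewrite -natrD ler_nat.
have [Hcv Hlim] := Hdc pihat Hopt.
set gap := fun n => _ in Hcv Hlim.
set c := exp_reward sigma_star pistar.
have cN : c <= N%:R by exact: reward_le.
set L := limn gap in Hlim.
have Hv : ((fun n => (c - eps%:R - gap n)%:E) @ \oo --> (c - eps%:R - L)%:E)%classic.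
  apply: cvg_EFin; first by apply: nearW.
  apply: cvgB; first exact: cvg_cst.
  exact: Hcv.
apply: (@le_trans _ _ (limn_einf (fun n => (c - eps%:R - gap n)%:E))).
  rewrite (cvg_limn_einf_sup Hv).1 lee_fin; lra.
apply: einf_mono => n; rewrite lee_fin /gap /= Hrew.
have := Heps _ (Hpis n); lra.
Qed.
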